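(* Let $X$ be a compact riemannian lamination and let $\Omega\subseteq Y\subseteq X$ be such that $\Omega$ is open in the leafwise topology and $Y$ is compact in the leafwise topology. There exists an open subset $\hat\Omega$ of $X$ such that $\hat\Omega\cap Y=\Omega$.
   Context: A lamination is a separable metrizable space with an atlas of laminated charts $\Phi:U\to\,]-1,1[^d\times T$ whose transition maps locally have the form $(x,t)\mapsto(\phi(x,t),\tau(t))$ ($\tau$ a homeomorphism onto its image, $\phi(\cdot,t)$ smooth diffeomorphisms varying continuously in $C^\infty_{loc}$ with $t$); plaques glue into smooth manifolds called leaves. A riemannian lamination carries a leafwise smooth leafwise metric. The leafwise topology of $X$ is the smallest topology containing all open subsets of leaves; a set is compact in it iff it is a finite union of compact subsets of leaves. ''Open subset of $X$'' refers to the ambient topology of $X$. *)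

(* Defs.v *)
From HB Require Import structures.
From mathcomp Require Import all_boot all_order all_algebra.
From mathcomp Require Import all_classical all_reals all_analysis.
From Stdlib Require Import Relations.
Set Implicit Arguments. Unset Strict Implicit. Unset Printing Implicit Defensive.
Import Order.TTheory GRing.Theory Num.Theory.
Import numFieldNormedType.Exports.
Local Open Scope classical_set_scope.
Local Open Scope ring_scope.

Section Smooth.
Variable R : realType.

Fixpoint dder {U W : normedModType R} (vs : seq U) (f : U -> W) : U -> W :=
  if vs is v :: vs' then (fun a => derive (dder vs' f) a v) else f.

Definition smooth_on {U W : normedModType R} (A : set U) (f : U -> W) :=
  forall vs : seq U,
    (forall x v, A x -> derivable (dder vs f) x v) /\
    {within A, continuous (dder vs f)}.

(* the family t |-> f(., t), t in S, consists of C^infty maps on A and depends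
   continuously on t in the C^infty_loc topology: all iterated derivatives are
   jointly continuous in (x, t) *)
Definition smooth_family {U W : normedModType R} {T : topologicalType}
    (A : set U) (S : set T) (f : U -> T -> W) :=
  forall vs : seq U,
    (forall t, S t -> forall x v, A x -> derivable (dder vs (f ^~ t)) x v) /\
    {within A `*` S, continuous (fun p => dder vs (f ^~ p.2) p.1)}.

Definition diffeo_on {U : normedModType R} (A : set U) (f : U -> U) :=
  [/\ open A, open (f @` A),
      (forall x y, A x -> A y -> f x = f y -> x = y),
      smooth_on A f &
      exists g : U -> U, (forall x, A x -> g (f x) = x) /\ smooth_on (f @` A) g].
End Smooth.

Definition homeo_on {T T' : topologicalType} (S : set T) (f : T -> T') :=
  [/\ {within S, continuous f},
      (forall x y, S x -> S y -> f x = f y -> x = y) &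
      exists g : T' -> T, (forall x, S x -> g (f x) = x) /\
                          {within f @` S, continuous g}].

Definition cube (R : realType) (d : nat) : set 'rV[R]_d :=
  [set x | forall k, -1 < x ord0 k < 1].

(* data of a laminated atlas: charts phi i : U i -> ]-1,1[^d x T i, with inverse psi i *)
Record lam_atlas (R : realType) (X : topologicalType) : Type := LamAtlas {
  la_dim : nat;
  la_idx : Type;
  la_T : la_idx -> topologicalType;
  la_U : la_idx -> set X;
  la_phi : forall i, X -> 'rV[R]_la_dim * la_T i;
  la_psi : forall i, 'rV[R]_la_dim * la_T i -> X }.
Arguments la_dim {R X} A : rename.
Arguments la_idx {R X} A : rename.
Arguments la_T {R X} A i : rename.
Arguments la_U {R X} A i : rename.
Arguments la_phi {R X} A i : rename.
Arguments la_psi {R X} A i : rename.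

Section Lamination.
Variables (R : realType) (X : topologicalType) (A : lam_atlas R X).
Local Notation d := (la_dim A).
Local Notation U := (la_U A).
Local Notation phi := (la_phi A).
Local Notation psi := (la_psi A).

Definition transition (i j : la_idx A) (p : 'rV[R]_d * la_T A i) := phi j (psi i p).
Arguments transition : clear implicits.

Definition is_lamination :=
  (forall x : X, exists i, U i x) /\
  (forall i,
    [/\ open (U i), {within U i, continuous (phi i)},
        phi i @` U i = @cube R d `*` setT &
        [/\ (forall x, U i x -> psi i (phi i x) = x),
             (forall p, (@cube R d `*` setT) p -> phi i (psi i p) = p) &
             {within @cube R d `*` setT, continuous (psi i)}]]) /\
  (forall i j p, (phi i @` (U i `&` U j)) p ->
    exists (V : set 'rV[R]_d) (S : set (la_T A i))
           (f : 'rV[R]_d -> la_T A i -> 'rV[R]_d) (tau : la_T A i -> la_T A j),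
      [/\ [/\ open V, open S, V `*` S `<=` phi i @` (U i `&` U j), V p.1 & S p.2],
          (forall x t, V x -> S t -> transition i j (x, t) = (f x t, tau t)),
          homeo_on S tau,
          (forall t, S t -> diffeo_on V (f ^~ t)) &
          smooth_family V S f]).

(* a leafwise metric, expressed in charts: g i x t is an inner product on R^d *)
Definition leaf_metric := forall i, 'rV[R]_d -> la_T A i -> 'rV[R]_d -> 'rV[R]_d -> R.

Definition is_riemannian (g : leaf_metric) :=
  (forall i x t, @cube R d x ->
     [/\ (forall u1 u2 w (a : R), g i x t (a *: u1 + u2) w = a * g i x t u1 w + g i x t u2 w),
         (forall u w, g i x t u w = g i x t w u) &
         (forall u, u != 0 -> 0 < g i x t u u)]) /\
  (forall i (u w : 'rV[R]_d), smooth_family (@cube R d) setT (fun x t => g i x t u w)) /\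
  (forall i j x t u w, (phi i @` (U i `&` U j)) (x, t) ->
     g i x t u w =
     g j (transition i j (x, t)).1 (transition i j (x, t)).2
         (derive (fun y => (transition i j (y, t)).1) x u)
         (derive (fun y => (transition i j (y, t)).1) x w)).

Definition same_plaque (x y : X) :=
  exists i, U i x /\ U i y /\ (phi i x).2 = (phi i y).2.

Definition leaf (L : set X) :=
  exists x, L = [set y | clos_refl_trans X same_plaque x y].

(* open subsets of a leaf (for the leaf's manifold topology, whose basic open sets
   are the open subsets psi i (V x {t}) of plaques) *)
Definition open_in_leaf (L B : set X) :=
  B `<=` L /\
  forall x, B x -> exists i (V : set 'rV[R]_d),
    [/\ open V, V `<=` @cube R d, U i x, V (phi i x).1 &
        psi i @` (V `*` [set (phi i x).2]) `<=` B].

(* the leafwise topology: the smallest topology containing all open subsets of leaves *)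
Definition leafwise_open (B : set X) :=
  forall O : set (set X),
    (forall L C, leaf L -> open_in_leaf L C -> O C) ->
    (forall F : set (set X), F `<=` O -> O (\bigcup_(C in F) C)) ->
    (forall C D, O C -> O D -> O (C `&` D)) ->
    O setT -> O B.

Definition leafwise_compact (Y : set X) :=
  forall (I : Type) (F : I -> set X), (forall k, leafwise_open (F k)) ->
    Y `<=` \bigcup_k F k ->
    exists J : set I, finite_set J /\ Y `<=` \bigcup_(k in J) F k.
End Lamination.

Definition separable_space (T : topologicalType) :=
  exists D : set T, countable D /\ closure D = setT.

(* Main.v *)
Require Import Defs.
From HB Require Import structures.
From mathcomp Require Import all_boot all_order all_algebra.
From mathcomp Require Import all_classical all_reals all_analysis.
From Stdlib Require Import Relations.
From mathcomp Require Import finmap.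
Import numFieldNormedType.Exports.
Local Open Scope classical_set_scope.

Definition ptd (T : topologicalType) (x : T) : Type := T.
HB.instance Definition _ (T : topologicalType) (x : T) := Topological.copy (@ptd T x) T.
HB.instance Definition _ (T : topologicalType) (x : T) := isPointed.Build (@ptd T x) x.

Lemma compact_coverT (T : topologicalType) (K : set T) : cover_compact K -> compact K.
Proof.
case: (pselect (exists k, K k)) => [[k Kk]|nK]; last first.
  have -> : K = set0 by apply/seteqP; split=> x // Kx; exact: nK (ex_intro _ x Kx).
  by move=> _; exact: compact0.
move=> H.
have : @compact (@ptd T k) K.
  rewrite compact_cover. exact: H.
exact.
Qed.


Lemma open_lw (R : realType) (X : topologicalType) (Lm : lam_atlas R X) (B : set X) :
  is_lamination Lm -> open B -> leafwise_open Lm B.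
Proof.
move=> [Hcov [Hch Htr]] oB O HO HU HI HT.
pose Lx x := [set y | clos_refl_trans X (same_plaque Lm) x y].
have -> : B = \bigcup_(C in [set C | exists x, B x /\ C = B `&` Lx x]) C.
  apply/seteqP; split=> [y By|y [C [x [Bx ->]] [] //]].
  exists (B `&` Lx y); first by exists y.
  split=> //; exact: rt_refl.
apply: HU => C [x [Bx ->]].
apply: (HO (Lx x)); first by exists x.
split; first by move=> y [].
move=> y [By Lxy].
have [i Uiy] := Hcov y.
have [oU cphi imphi [psiphi phipsi cpsi]] := Hch i.
set t := (la_phi Lm i y).2.
have ocube : open (@cube R (la_dim Lm) `*` [set: la_T Lm i]).
  rewrite -imphi openE => p [u Uu <-].
  have [V [S [f [tau [[oV oS VS Vp Sp] _ _ _ _]]]]] := Htr i i (la_phi Lm i u)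
    (ex_intro2 _ _ u (conj Uu Uu) erefl).
  rewrite /interior; apply: (@filterS _ _ _ (V `*` S)).
    by move=> q /VS [w [Uw _] <-]; exists w.
  exists (V, S) => //; split; [exact: open_nbhs_nbhs | exact: open_nbhs_nbhs].
pose W := (@cube R (la_dim Lm) `*` [set: la_T Lm i]) `&` la_psi Lm i @^-1` B.
have oW : open W.
  apply: (proj1 (continuous_inP _ ocube)) => //.
  by rewrite -continuous_open_subspace.
pose V := [set v | W (v, t)].
have oV : open V.
  rewrite openE => v Vv; rewrite /interior.
  have := oW _ Vv; rewrite /interior => -[[P Q] [Pv Qt] PQW].
  apply: (@filterS _ _ _ P) => // w Pw; apply: PQW; split => //=.
  exact: nbhs_singleton.
have phiy : (@cube R (la_dim Lm) `*` [set: la_T Lm i]) (la_phi Lm i y).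
  by rewrite -imphi; exists y.
exists i, V; split => //.
- by move=> v [[]].
- rewrite /V /W /t /= -surjective_pairing; split => //=.
  by rewrite psiphi.
- move=> _ [[v s] [/= Vv ->] <-]; split; first by case: Vv.
  have cvt : (@cube R (la_dim Lm) `*` [set: la_T Lm i]) (v, t) by case: Vv.
  apply: rt_trans Lxy (rt_step _ _ _ _ _).
  exists i; split => //; split.
    by move: (cvt); rewrite -imphi => -[u Uu <-]; rewrite psiphi.
  by rewrite phipsi.
Qed.

Lemma lw_union (R : realType) (X : topologicalType) (Lm : lam_atlas R X) (B1 B2 : set X) :
  leafwise_open Lm B1 -> leafwise_open Lm B2 -> leafwise_open Lm (B1 `|` B2).
Proof.
move=> H1 H2 O HO HU HI HT.
have -> : B1 `|` B2 = \bigcup_(C in [set C | C = B1 \/ C = B2]) C.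
  apply/seteqP; split=> [y [By|By]|y [C [->|->] Cy]].
  - by exists B1 => //; left.
  - by exists B2 => //; right.
  - by left.
  - by right.
apply: (HU) => C [] ->.
  exact: (H1 O).
exact: (H2 O).
Qed.

Theorem lemma4p8 (R : realType) (X : pseudoMetricType R)
    (A : lam_atlas R X) (g : leaf_metric A) (Omega Y : set X) :
  hausdorff_space X -> separable_space X ->
  is_lamination A -> is_riemannian g ->
  compact [set: X] ->
  Omega `<=` Y -> leafwise_open A Omega -> leafwise_compact A Y ->
  exists Omegahat : set X, open Omegahat /\ Omegahat `&` Y = Omega.
Proof.
move=> hX _ lamA _ _ OY oO cY.
pose K := Y `\` Omega.
have cK : compact K.
  apply: compact_coverT => I D f fop Kcov.
  case: (pselect (exists k, K k)) => [[k0 Kk0]|nK]; last first.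
    exists fset0 => // x Kx; exfalso; exact: nK (ex_intro _ x Kx).
  pose F i := [set x | D i /\ f i x] `|` Omega.
  have Fo : forall i, leafwise_open A (F i).
    move=> i; apply: lw_union => //; apply: open_lw => //.
    case: (pselect (D i)) => Di.
      have -> : [set x | D i /\ f i x] = f i.
        by apply/seteqP; split=> x //= [].
      exact: fop.
    have -> : [set x | D i /\ f i x] = set0.
      by apply/seteqP; split=> x //= [].
    exact: open0.
  have YF : Y `<=` \bigcup_k F k.
    move=> y Yy; case: (pselect (Omega y)) => Oy.
      have [i0 _ _] := Kcov _ Kk0.
      by exists i0 => //; right.
    have [i Di fiy] := Kcov y (conj Yy Oy).
    by exists i => //; left.
  have [J [fJ YJ]] := cY I F Fo YF.
  have fJD : finite_set (J `&` D) by exact: finite_setIl.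
  exists (fset_set (J `&` D)).
    by move=> j; rewrite in_fset_set // !in_setE => -[].
  move=> x [Yx Ox].
  have [j Jj [[Dj fjx]|//]] := YJ x Yx.
  exists j => //=.
  by rewrite in_fset_set // in_setE.
have clK : closed K by exact: compact_closed.
exists (~` K); split; first exact: closed_openC.
apply/seteqP; split=> x.
  move=> [nKx Yx]; case: (pselect (Omega x)) => // Ox.
  by exfalso; apply: nKx.
move=> Ox; split; last exact: OY.
by move=> [].
Qed.
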